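(* Let $f$ be convex, $C^2$, with $\nabla^2 f\succ0$ everywhere, and $L_{\text{semi}}$-semi-strongly self-concordant; let $L_{\text{est}}\ge L_{\text{semi}}$, let $x_k\in\mathbb{R}^d$ with $\nabla f(x_k)\ne0$, and let $x_{k+1}$ be the AICN iterate from $x_k$ with stepsize $\alpha_k$. Then: (i) $\|\nabla f(x_{k+1})\|_{x_k}^*\le L_{\text{est}}\alpha_k^2\big(\|\nabla f(x_k)\|_{x_k}^*\big)^2< L_{\text{est}}\big(\|\nabla f(x_k)\|_{x_k}^*\big)^2$. (ii) If moreover $0<c<1$ and $\|\nabla f(x_k)\|_{x_k}^*\le\frac{(2c+1)^2-1}{2L_{\text{est}}}$, then $\|\nabla f(x_{k+1})\|_{x_{k+1}}^*\le\frac{L_{\text{est}}\alpha_k^2}{1-c}\big(\|\nabla f(x_k)\|_{x_k}^*\big)^2$. (iii) If in addition to (ii) also $\|\nabla f(x_k)\|_{x_k}^*\le\frac{(2-c)^2-1}{2L_{\text{est}}}$, then $\|\nabla f(x_{k+1})\|_{x_{k+1}}^*\le\|\nabla f(x_k)\|_{x_k}^*$.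
   Context: Local norms: $\|h\|_x=\langle\nabla^2 f(x)h,h\rangle^{1/2}$, $\|g\|_x^*=\langle g,[\nabla^2 f(x)]^{-1}g\rangle^{1/2}$; $\|H\|_{op}=\sup_{v\neq0}\|Hv\|_x^*/\|v\|_x$ at base point $x$. $f$ is $L_{\text{semi}}$-semi-strongly self-concordant if $\|\nabla^2 f(y)-\nabla^2 f(x)\|_{op}\le L_{\text{semi}}\|y-x\|_x$ for all $x,y$ (operator norm at base point $x$). AICN step with parameter $L_{\text{est}}>0$: $x_{k+1}=x_k-\alpha_k[\nabla^2 f(x_k)]^{-1}\nabla f(x_k)$ with $\alpha_k=\frac{-1+\sqrt{1+2L_{\text{est}}\|\nabla f(x_k)\|_{x_k}^*}}{L_{\text{est}}\|\nabla f(x_k)\|_{x_k}^*}$. *)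

(* Defs.v *)
From HB Require Import structures.
From mathcomp Require Import all_boot all_order all_algebra.
From mathcomp Require Import all_classical all_reals all_analysis.
Set Implicit Arguments. Unset Strict Implicit. Unset Printing Implicit Defensive.
Import Order.TTheory GRing.Theory Num.Theory.
Import numFieldNormedType.Exports.
Local Open Scope ring_scope.

Definition dotp (R : realType) (d : nat) (u v : 'cV[R]_d) : R := (u^T *m v) 0 0.

(* Local norm  ||h||_x = <H h, h>^{1/2}, with H = Hessian at x. *)
Definition lnorm (R : realType) (d : nat) (H : 'M[R]_d) (h : 'cV[R]_d) : R :=
  Num.sqrt (dotp (H *m h) h).

Definition dnorm (R : realType) (d : nat) (H : 'M[R]_d) (g : 'cV[R]_d) : R :=
  Num.sqrt (dotp g (invmx H *m g)).

(* grad is the gradient and hess the Hessian of f, f being C^2: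
   directional derivatives of f are <grad x, v>, directional derivatives of
   grad are hess x *m v, and hess is continuous. *)
Definition C2_with (R : realType) (d : nat) (f : 'cV[R]_d -> R)
  (grad : 'cV[R]_d -> 'cV[R]_d) (hess : 'cV[R]_d -> 'M[R]_d) : Prop :=
  (forall x v : 'cV[R]_d, is_derive x v f (dotp (grad x) v)) /\
  (forall x v : 'cV[R]_d, is_derive x v grad (hess x *m v)) /\
  continuous hess.

Definition hess_pd (R : realType) (d : nat) (hess : 'cV[R]_d -> 'M[R]_d) : Prop :=
  forall x v : 'cV[R]_d, v != 0 -> 0 < dotp (hess x *m v) v.

(* L-semi-strong self-concordance:
   ||hess y - hess x||_op <= L ||y - x||_x, where the operator norm at x is
   sup_{v <> 0} ||A v||_x^* / ||v||_x; the bound on the sup is written out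
   as the bound on each quotient (multiplied out). *)
Definition semi_strongly_sc (R : realType) (d : nat)
  (hess : 'cV[R]_d -> 'M[R]_d) (L : R) : Prop :=
  forall x y v : 'cV[R]_d, v != 0 ->
    dnorm (hess x) ((hess y - hess x) *m v) / lnorm (hess x) v
      <= L * lnorm (hess x) (y - x).

Definition aicn_alpha (R : realType) (Lest G : R) : R :=
  (-1 + Num.sqrt (1 + 2 * Lest * G)) / (Lest * G).

Definition aicn_step (R : realType) (d : nat) (grad : 'cV[R]_d -> 'cV[R]_d)
  (hess : 'cV[R]_d -> 'M[R]_d) (Lest : R) (x : 'cV[R]_d) : 'cV[R]_d :=
  x - aicn_alpha Lest (dnorm (hess x) (grad x)) *: (invmx (hess x) *m grad x).

(* Main.v *)
Require Import Defs.
From HB Require Import structures.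
From mathcomp Require Import all_boot all_order all_algebra.
From mathcomp Require Import all_classical all_reals all_analysis.
Import Order.TTheory GRing.Theory Num.Theory.
Import numFieldNormedType.Exports.
From mathcomp Require Import ring lra.
Local Open Scope classical_set_scope.
Local Open Scope ring_scope.

Section S.
Variable R : realType.

Lemma dotpE d (u v : 'cV[R]_d) : dotp u v = \sum_k u k 0 * v k 0.
Proof. by rewrite /dotp mxE; apply: eq_bigr => k _; rewrite mxE. Qed.

Lemma cont_dotpl d (w : 'cV[R]_d) : continuous (fun G : 'cV[R]_d => dotp G w).
Proof.
have -> : (fun G : 'cV[R]_d => dotp G w) = (fun G => \sum_(k < d) (G k 0 * w k 0)).
  by apply: funext => G; rewrite dotpE.
apply: continuous_big; first exact: add_continuous.
move=> k _ G; apply: continuousM; first exact: coord_continuous.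
exact: cst_continuous.
Qed.

Lemma cont_dotpM d (u v : 'cV[R]_d) :
  continuous (fun M : 'M[R]_d => dotp (M *m v) u).
Proof.
have -> : (fun M : 'M[R]_d => dotp (M *m v) u) =
   (fun M => \sum_(k < d) ((\sum_(j < d) (M k j * v j 0)) * u k 0)).
  apply: funext => M; rewrite dotpE; apply: eq_bigr => k _; by rewrite mxE.
apply: continuous_big; first exact: add_continuous.
move=> k _ M; apply: continuousM; last exact: cst_continuous.
apply: continuous_big; first exact: add_continuous.
move=> j _ N; apply: continuousM; first exact: coord_continuous.
exact: cst_continuous.
Qed.
End S.

Section S.
Variable R : realType.

Lemma line_derive (V W : normedModType R) (F : V -> W) (p u : V) (t : R) df :
  is_derive (p + t *: u) u F df -> is_derive t 1 (fun s : R => F (p + s *: u)) df.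
Proof.
move=> [H1 H2].
have E : (fun h : R => h^-1 *: (((fun s : R => F (p + s *: u)) \o shift t) (h *: 1) - F (p + t *: u)))
   = (fun h => h^-1 *: ((F \o shift (p + t *: u)) (h *: u) - F (p + t *: u))).
  apply: funext => h /=; congr (_ *: (F _ - _)).
  by rewrite [h%:A]mulr1 scalerDl addrCA.
split; rewrite /derivable /derive ?E //.
Qed.
End S.

Section S.
Variable R : realType.

Lemma dotpDl d (x y w : 'cV[R]_d) : dotp (x + y) w = dotp x w + dotp y w.
Proof. by rewrite !dotpE -big_split; apply: eq_bigr => k _; rewrite mxE mulrDl. Qed.
Lemma dotpZl d (k : R) (x w : 'cV[R]_d) : dotp (k *: x) w = k * dotp x w.
Proof. by rewrite !dotpE mulr_sumr; apply: eq_bigr => i _; rewrite mxE mulrA. Qed.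
Lemma dotpNl d (x w : 'cV[R]_d) : dotp (- x) w = - dotp x w.
Proof. by rewrite -scaleN1r dotpZl mulN1r. Qed.
Lemma dotpBl d (x y w : 'cV[R]_d) : dotp (x - y) w = dotp x w - dotp y w.
Proof. by rewrite dotpDl dotpNl. Qed.

Lemma is_derive_dotpl d (V : normedModType R) (F : V -> 'cV[R]_d) a v dF w :
  is_derive a v F dF -> is_derive a v (fun y => dotp (F y) w) (dotp dF w).
Proof.
move=> [H1 H2].
have Hc : (fun h : R => h^-1 *: ((F \o shift a) (h *: v) - F a)) @ 0^' --> dF.
  by rewrite -H2; exact: H1.
have Hc2 : (fun h : R => h^-1 *: (((fun y => dotp (F y) w) \o shift a) (h *: v)
      - dotp (F a) w)) @ 0^' --> dotp dF w.
  have -> : (fun h : R => h^-1 *: (((fun y => dotp (F y) w) \o shift a) (h *: v)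
      - dotp (F a) w)) = (fun G => dotp G w) \o (fun h : R => h^-1 *: ((F \o shift a) (h *: v) - F a)).
    by apply: funext => h /=; rewrite dotpZl dotpBl.
  apply: cvg_comp Hc _; exact: cont_dotpl.
split; first exact: cvgP Hc2.
exact: cvg_lim Hc2.
Qed.
End S.

Section S.
Variable R : realType.
Variable d : nat.
Variables (f : 'cV[R]_d -> R) (grad : 'cV[R]_d -> 'cV[R]_d) (hess : 'cV[R]_d -> 'M[R]_d).
Hypothesis Hf : forall x v : 'cV[R]_d, is_derive x v f (dotp (grad x) v).
Hypothesis Hg : forall x v : 'cV[R]_d, is_derive x v grad (hess x *m v).

Lemma mvt_all (k dk : R -> R) (a b : R) : a < b ->
  (forall s : R, is_derive s (1:R) k (dk s)) -> exists2 c, a < c < b & k b - k a = dk c * (b - a).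
Proof.
move=> ab H.
have [c cI E] := @MVT R k dk a b ab (fun s _ => H s) (derivable_within_continuous (fun s _ => (H s).(ex_derive))).
by exists c => //; move: cI; rewrite in_itv.
Qed.

Lemma mixed (x u v : 'cV[R]_d) (t : R) : 0 < t ->
  exists xi eta : R, [/\ 0 < xi < t, 0 < eta < t &
   f (x + t *: v + t *: u) - f (x + t *: u) - (f (x + t *: v) - f x)
     = t * t * dotp (hess (x + xi *: u + eta *: v) *m v) u].
Proof.
move=> t0.
pose k := fun s : R => f ((x + t *: v) + s *: u) - f (x + s *: u).
pose dk := fun s : R => dotp (grad ((x + t *: v) + s *: u)) u - dotp (grad (x + s *: u)) u.
have [xi xiI E1] := @mvt_all k dk 0 t t0 (fun s => is_deriveB (@line_derive R _ _ _ _ _ _ _ (Hf _ _)) (@line_derive R _ _ _ _ _ _ _ (Hf _ _))).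
pose m := fun r : R => dotp (grad ((x + xi *: u) + r *: v)) u.
pose dm := fun r : R => dotp (hess ((x + xi *: u) + r *: v) *m v) u.
have [eta etaI E2] := @mvt_all m dm 0 t t0 (fun r => @line_derive R _ _ _ _ _ _ _ (@is_derive_dotpl R d _ _ _ _ _ u (Hg _ _))).
exists xi, eta; split => //.
move: E1; rewrite /k /dk !scale0r !addr0 subr0 => ->.
have -> : x + t *: v + xi *: u = x + xi *: u + t *: v by rewrite addrAC.
have := E2; rewrite /m /dm scale0r addr0 subr0 => ->.
by rewrite [RHS]mulrC mulrA.
Qed.
Hypothesis Hc : continuous hess.

Lemma near_bound (x u v : 'cV[R]_d) (t xi eta : R) : 0 < xi < t -> 0 < eta < t ->
  `|x - (x + xi *: u + eta *: v)| <= t * (`|u| + `|v|).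
Proof.
move=> /andP[x0 xt] /andP[e0 et].
rewrite -addrA opprD addNKr normrN mulrDr.
apply: le_trans (ler_normD _ _) _.
rewrite !normrZ (ger0_norm (ltW x0)) (ger0_norm (ltW e0)).
by apply: lerD; apply: ler_wpM2r => //; apply: ltW.
Qed.

Lemma hess_sym (x u v : 'cV[R]_d) : dotp (hess x *m v) u = dotp (hess x *m u) v.
Proof.
pose F1 y := dotp (hess y *m v) u.
pose F2 y := dotp (hess y *m u) v.
have C1 : F1 @ x --> F1 x by apply: cvg_comp (Hc x) (@cont_dotpM R d u v (hess x)).
have C2 : F2 @ x --> F2 x by apply: cvg_comp (Hc x) (@cont_dotpM R d v u (hess x)).
apply/eqP; apply/negPn/negP => ne.
pose e := `|F1 x - F2 x| / 2.
have e0 : 0 < e by rewrite divr_gt0 // normr_gt0 subr_eq0.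
move/cvgrPdist_lt: C1 => /(_ e e0) /nbhs_normP [d1 d10 P1].
move/cvgrPdist_lt: C2 => /(_ e e0) /nbhs_normP [d2 d20 P2].
pose del := Num.min d1 d2.
have del0 : 0 < del by rewrite lt_min d10 d20.
pose t := del / (`|u| + `|v| + 1).
have t0 : 0 < t by rewrite divr_gt0 // ltr_wpDl // addr_ge0.
have tb : t * (`|u| + `|v|) < del.
  rewrite /t -mulrA gtr_pMr //.
  by rewrite mulrC ltr_pdivrMr ?mul1r ?ltrDl // ltr_wpDl // addr_ge0.
have [xi [eta [xiI etaI E1]]] := @mixed x u v t t0.
have [xi' [eta' [xiI' etaI' E2]]] := @mixed x v u t t0.
have EQ : F1 (x + xi *: u + eta *: v) = F2 (x + xi' *: v + eta' *: u).
  apply: (@mulfI _ (t * t)); first by rewrite mulf_neq0 // gt_eqF.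
  rewrite -E1 -E2 [x + t *: u + t *: v]addrAC.
  by ring.
have h1 := P1 (x + xi *: u + eta *: v).
have h2 := P2 (x + xi' *: v + eta' *: u).
have b1 : `|x - (x + xi *: u + eta *: v)| < d1.
  apply: le_lt_trans (near_bound _ _ _ _ _ _ xiI etaI) _.
  by apply: lt_le_trans tb _; rewrite ge_min lexx.
have b2 : `|x - (x + xi' *: v + eta' *: u)| < d2.
  apply: le_lt_trans (near_bound _ _ _ _ _ _ xiI' etaI') _.
  rewrite addrC.
  by apply: lt_le_trans tb _; rewrite ge_min lexx orbT.
have := h1 b1; have := h2 b2; rewrite /= -EQ => L2 L1.
have : `|F1 x - F2 x| < e + e.
  rewrite (_ : F1 x - F2 x = (F1 x - F1 (x + xi *: u + eta *: v)) - (F2 x - F1 (x + xi *: u + eta *: v))); last by ring.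
  by apply: le_lt_trans (ler_normB _ _) _; apply: ltrD.
by rewrite -splitr ltxx.
Qed.
End S.

Set Implicit Arguments. Unset Strict Implicit.
Section LA.
Variable R : realType.
Variable d : nat.

Lemma dotpC (u v : 'cV[R]_d) : dotp u v = dotp v u.
Proof. by rewrite !dotpE; apply: eq_bigr => k _; rewrite mulrC. Qed.
Lemma dotpDr (x y w : 'cV[R]_d) : dotp w (x + y) = dotp w x + dotp w y.
Proof. by rewrite dotpC dotpDl -!(dotpC w). Qed.
Lemma dotpZr (k : R) (x w : 'cV[R]_d) : dotp w (k *: x) = k * dotp w x.
Proof. by rewrite dotpC dotpZl dotpC. Qed.
Lemma dotpBr (x y w : 'cV[R]_d) : dotp w (x - y) = dotp w x - dotp w y.
Proof. by rewrite dotpC dotpBl -!(dotpC w). Qed.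
Lemma dotp0l (w : 'cV[R]_d) : dotp 0 w = 0.
Proof. by rewrite -(scale0r 0) dotpZl mul0r. Qed.
Lemma dotp0r (w : 'cV[R]_d) : dotp w 0 = 0.
Proof. by rewrite dotpC dotp0l. Qed.

Variable H : 'M[R]_d.
Hypothesis Hsym : forall u v, dotp (H *m v) u = dotp (H *m u) v.
Hypothesis Hpd : forall v, v != 0 -> 0 < dotp (H *m v) v.

Lemma qf_ge0 v : 0 <= dotp (H *m v) v.
Proof.
have [->|/Hpd/ltW //] := eqVneq v 0.
by rewrite dotp0r.
Qed.

Lemma Hunit : H \in unitmx.
Proof.
rewrite unitmxE unitfE; apply/negP => /det0P [w w0 Hw].
have : 0 < dotp (H *m w^T) w^T by apply: Hpd; rewrite -(inj_eq (@trmx_inj _ _ _)) trmxK trmx0.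
by rewrite dotpC /dotp trmxK mulmxA Hw mul0mx mxE ltxx.
Qed.
Local Notation Hi := (invmx H).
Lemma HiH : Hi *m H = 1%:M. Proof. exact: mulVmx Hunit. Qed.
Lemma HHi : H *m Hi = 1%:M. Proof. exact: mulmxV Hunit. Qed.

Lemma dnorm_qf g : dotp g (Hi *m g) = dotp (H *m (Hi *m g)) (Hi *m g).
Proof. by rewrite mulmxA HHi mul1mx dotpC. Qed.

Lemma dqf_ge0 g : 0 <= dotp g (Hi *m g).
Proof. by rewrite dnorm_qf qf_ge0. Qed.

Lemma lnorm_sqr v : lnorm H v ^+ 2 = dotp (H *m v) v.
Proof. by rewrite /lnorm sqr_sqrtr // qf_ge0. Qed.
Lemma dnorm_sqr g : dnorm H g ^+ 2 = dotp g (Hi *m g).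
Proof. by rewrite /dnorm sqr_sqrtr // dqf_ge0. Qed.
Lemma lnorm_ge0 v : 0 <= lnorm H v. Proof. exact: sqrtr_ge0. Qed.
Lemma dnorm_ge0 v : 0 <= dnorm H v. Proof. exact: sqrtr_ge0. Qed.

Lemma dnormH w : dnorm H (H *m w) = lnorm H w.
Proof. by rewrite /dnorm /lnorm mulmxA HiH mul1mx. Qed.
Lemma lnormHi g : lnorm H (Hi *m g) = dnorm H g.
Proof. by rewrite /dnorm /lnorm dnorm_qf. Qed.

Lemma lnormZ k v : lnorm H (k *: v) = `|k| * lnorm H v.
Proof.
rewrite /lnorm -scalemxAr dotpZl dotpZr mulrA -expr2 sqrtrM ?sqr_ge0 //.
by rewrite sqrtr_sqr.
Qed.

Lemma CS a c : dotp (H *m a) c ^+ 2 <= dotp (H *m a) a * dotp (H *m c) c.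
Proof.
have [->|c0] := eqVneq c 0.
  by rewrite dotp0r mulmx0 dotp0l expr0n mulr0.
have P0 := Hpd c0.
set A := dotp (H *m a) a; set P := dotp (H *m c) c; set B := dotp (H *m a) c.
have := qf_ge0 (a - (B / P) *: c).
rewrite mulmxBr -scalemxAr !(dotpBl, dotpBr, dotpZl, dotpZr) (Hsym a c) -/A -/B -/P.
move=> h.
have : 0 <= (A - B / P * B - (B / P * B - B / P * (B / P * P))) * P.
  by apply: mulr_ge0 => //; apply: ltW.
have -> : (A - B / P * B - (B / P * B - B / P * (B / P * P))) * P = A * P - B ^+ 2.
  by field; apply: lt0r_neq0.
by rewrite subr_ge0.
Qed.

Lemma pair a b : `|dotp a b| <= lnorm H a * dnorm H b.
Proof.
have -> : dotp a b = dotp (H *m a) (Hi *m b).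
  by rewrite -Hsym mulmxA HHi mul1mx dotpC.
rewrite -lnormHi /lnorm -sqrtrM ?qf_ge0 //.
rewrite -sqrtr_sqr ler_sqrt; first exact: CS.
by apply: mulr_ge0; apply: qf_ge0.
Qed.

Lemma pair' a b : `|dotp b a| <= dnorm H b * lnorm H a.
Proof. by rewrite dotpC mulrC pair. Qed.
End LA.

Section Loew.
Variable R : realType.
Variable d : nat.
Lemma loewner (A B : 'M[R]_d)
  (symA : forall u v, dotp (A *m v) u = dotp (A *m u) v)
  (pdA : forall v, v != 0 -> 0 < dotp (A *m v) v)
  (symB : forall u v, dotp (B *m v) u = dotp (B *m u) v)
  (pdB : forall v, v != 0 -> 0 < dotp (B *m v) v) (k : R) :
  0 <= k -> (forall v, dotp (A *m v) v <= k * dotp (B *m v) v) ->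
  forall g, dnorm B g <= Num.sqrt k * dnorm A g.
Proof.
move=> k0 Hk g.
set w := invmx B *m g.
have h1 : dnorm B g ^+ 2 <= lnorm A w * dnorm A g.
  rewrite (dnorm_sqr pdB) dotpC.
  apply: le_trans (pair symA pdA w g); exact: ler_norm.
have h2 : lnorm A w <= Num.sqrt k * dnorm B g.
  rewrite -(lnormHi pdB) /lnorm -sqrtrM // ler_sqrt; first exact: Hk.
  by apply: mulr_ge0 => //; apply: qf_ge0.
have n0 := dnorm_ge0 B g.
have a0 := dnorm_ge0 A g.
have s0 : 0 <= Num.sqrt k by apply: sqrtr_ge0.
have l0 : 0 <= lnorm A w by apply: sqrtr_ge0.
have h3 : dnorm B g ^+ 2 <= Num.sqrt k * dnorm B g * dnorm A g.
  apply: le_trans h1 _; apply: ler_wpM2r => //.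
have [->|np] := eqVneq (dnorm B g) 0; first by apply: mulr_ge0.
have np' : 0 < dnorm B g by rewrite lt_def np n0.
rewrite -(ler_pM2l np') -expr2 (le_trans h3) //.
by rewrite mulrCA mulrA.
Qed.
End Loew.

Unset Implicit Arguments. Set Strict Implicit.


Lemma Qpos (R : realFieldType) (c : R) : 0 < c -> c < 1 -> 0 <= 4 + 9*c - 32*c^+2 + 28*c^+3 - 8*c^+4.
Proof.
move=> c0 c1.
have h1 : 0 <= c * (1 - c) by nra.
nra.
Qed.
Lemma numlem (R : realFieldType) (c w s : R) : 0 < c -> c < 1 -> 0 <= s -> s <= 2 * c -> 0 <= w ->
  w ^+ 2 <= (1 + s) * s ^+ 2 -> (1 + w) * (1 - c) ^+ 2 <= 1.
Proof.
move=> c0 c1 s0 sc w0 ws.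
have Q := @Qpos R c c0 c1.
have h2 : w ^+ 2 <= (1 + 2 * c) * (2 * c) ^+ 2.
  apply: le_trans ws _.
  have e1 : s ^+ 2 <= (2 * c) ^+ 2 by rewrite ler_sqr ?nnegrE //; nra.
  apply: ler_pM => //; [nra | nra | lra].
pose m := (1 - c) ^+ 2.
have m0 : 0 <= m by rewrite /m sqr_ge0.
have h3 : (w * m) ^+ 2 <= (c * (2 - c)) ^+ 2.
  rewrite exprMn.
  apply: le_trans (ler_wpM2r (sqr_ge0 m) h2) _.
  have : 0 <= c ^+ 3 * (4 + 9*c - 32*c^+2 + 28*c^+3 - 8*c^+4) by apply: mulr_ge0 => //; apply: exprn_ge0; lra.
  rewrite /m -subr_ge0; move=> hh; apply: le_trans hh _; rewrite le_eqVlt; apply/orP; left; apply/eqP; ring.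
have h4 : w * m <= c * (2 - c).
  rewrite -ler_sqr ?nnegrE //; [by apply: mulr_ge0 | nra].
rewrite /m in h4; nra.
Qed.

Section Main.
Variable R : realType.
Variable d : nat.
Variables (f : 'cV[R]_d -> R) (grad : 'cV[R]_d -> 'cV[R]_d) (hess : 'cV[R]_d -> 'M[R]_d).
Variables (Ls L : R).
Hypothesis Hf : forall x v : 'cV[R]_d, is_derive x v f (dotp (grad x) v).
Hypothesis Hg : forall x v : 'cV[R]_d, is_derive x v grad (hess x *m v).
Hypothesis Hc : continuous hess.
Hypothesis Hpd : hess_pd hess.
Hypothesis Hsc : semi_strongly_sc hess Ls.
Hypothesis L0 : 0 < L.
Hypothesis LL : Ls <= L.

Let symP p : forall u v, dotp (hess p *m v) u = dotp (hess p *m u) v :=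
  @hess_sym R d f grad hess Hf Hg Hc p.
Let pdP p : forall v, v != 0 -> 0 < dotp (hess p *m v) v := fun v => Hpd p v.

Lemma polyder (C K t : R) : is_derive t (1:R) (fun s : R => s * C + s ^+ 2 * K) (C + 2 * t * K).
Proof.
apply: is_derive_eq.
rewrite !scaler0 !add0r -[C%:A]/(C * 1) -[t%:A]/(t * 1) -[K *: _]/(K * _).
ring.
Qed.

Lemma dnorm0 (H : 'M[R]_d) : dnorm H 0 = 0.
Proof. by rewrite /dnorm dotp0l sqrtr0. Qed.

Lemma scb p y v : dnorm (hess p) ((hess y - hess p) *m v)
   <= L * lnorm (hess p) v * lnorm (hess p) (y - p).
Proof.
have [->|v0] := eqVneq v 0.
  rewrite mulmx0 dnorm0; apply: mulr_ge0; first apply: mulr_ge0.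
  - exact: ltW.
  - exact: lnorm_ge0.
  - exact: lnorm_ge0.
have l0 : 0 < lnorm (hess p) v by rewrite /lnorm sqrtr_gt0; apply: pdP.
have := Hsc p y v v0; rewrite ler_pdivrMr // => h.
apply: (le_trans h).
rewrite mulrAC; apply: ler_wpM2r; first exact: lnorm_ge0.
apply: ler_wpM2r => //; exact: lnorm_ge0.
Qed.

Lemma taylor x hm z :
  dotp (grad (x + hm)) z - dotp (grad x) z - dotp (hess x *m hm) z
    <= L / 2 * lnorm (hess x) hm ^+ 2 * lnorm (hess x) z.
Proof.
set C := dotp (hess x *m hm) z.
set K := L / 2 * lnorm (hess x) hm ^+ 2 * lnorm (hess x) z.
pose psi := fun t : R => dotp (grad (x + t *: hm)) z - (t * C + t ^+ 2 * K).
pose dpsi := fun t : R => dotp (hess (x + t *: hm) *m hm) z - (C + 2 * t * K).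
have D : forall t : R, is_derive t (1:R) psi (dpsi t).
  move=> t; apply: is_deriveB; last exact: polyder.
  exact: (@line_derive R _ _ _ _ _ _ _ (@is_derive_dotpl R d _ _ _ _ _ z (Hg _ _))).
have [c /andP[c0 c1] E] := @mvt_all R psi dpsi 0 1 ltr01 D.
have : dpsi c <= 0.
  rewrite /dpsi subr_le0.
  have e1 : dotp (hess (x + c *: hm) *m hm) z = C + dotp ((hess (x + c *: hm) - hess x) *m hm) z.
    rewrite mulmxBl dotpBl /C; ring.
  rewrite e1 lerD2l.
  apply: le_trans (ler_norm _) _.
  apply: le_trans (pair' (symP x) (@pdP x) _ _) _.
  have := scb x (x + c *: hm) hm; rewrite addrAC subrr add0r lnormZ ?ger0_norm ?(ltW c0) //.
  move=> h; apply: le_trans (ler_wpM2r (lnorm_ge0 _ _) h) _.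
  rewrite /K.
  have lz := lnorm_ge0 (hess x) z.
  have lh := lnorm_ge0 (hess x) hm.
  have : c * (L * lnorm (hess x) hm ^+ 2 * lnorm (hess x) z) <= 1 * (L * lnorm (hess x) hm ^+ 2 * lnorm (hess x) z).
    apply: ler_wpM2r; last exact: ltW.
    by apply: mulr_ge0 => //; apply: mulr_ge0; [exact: ltW | exact: sqr_ge0].
  move=> hh; rewrite expr2; nra.
move: E; rewrite subr0 mulr1 /psi !scale0r addr0 scale1r mul0r expr0n /= mul0r addr0 subr0 => E.
rewrite -E expr1n !mul1r => h.
rewrite -/C; lra.
Qed.

Lemma stepA p y v : dotp (hess y *m v) v
   <= (1 + L * lnorm (hess p) (y - p)) * dotp (hess p *m v) v.
Proof.
have e1 : dotp (hess y *m v) v = dotp (hess p *m v) v + dotp ((hess y - hess p) *m v) v.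
  rewrite mulmxBl dotpBl; ring.
rewrite e1 mulrDl mul1r lerD2l.
apply: le_trans (ler_norm _) _.
apply: le_trans (pair' (symP p) (@pdP p) _ _) _.
apply: le_trans (ler_wpM2r (lnorm_ge0 _ _) (scb p y v)) _.
rewrite -(lnorm_sqr (symP p) (@pdP p)) expr2.
rewrite le_eqVlt; apply/orP; left; apply/eqP; ring.
Qed.

Lemma mainres xk : grad xk != 0 ->
  let G := dnorm (hess xk) (grad xk) in
  let alpha := aicn_alpha L G in
  let xk1 := aicn_step grad hess L xk in
  (dnorm (hess xk) (grad xk1) <= L * alpha ^+ 2 * G ^+ 2
   /\ L * alpha ^+ 2 * G ^+ 2 < L * G ^+ 2)
  /\ (forall c : R, 0 < c -> c < 1 ->
        G <= ((2 * c + 1) ^+ 2 - 1) / (2 * L) ->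
        dnorm (hess xk1) (grad xk1) <= L * alpha ^+ 2 / (1 - c) * G ^+ 2)
  /\ (forall c : R, 0 < c -> c < 1 ->
        G <= ((2 * c + 1) ^+ 2 - 1) / (2 * L) ->
        G <= ((2 - c) ^+ 2 - 1) / (2 * L) ->
        dnorm (hess xk1) (grad xk1) <= G).
Proof.
move=> g0; cbv zeta.
set xk1 := aicn_step grad hess L xk.
have sH := symP xk; have pH := @pdP xk.
set H := hess xk in sH pH *.
set g := grad xk in g0 *.
set G := dnorm H g.
set alpha := aicn_alpha L G.
set w := invmx H *m g.
have Hw : H *m w = g by rewrite /w mulmxA (HHi pH) mul1mx.
have w0 : w != 0 by apply: contraNneq g0 => w0; rewrite -Hw w0 mulmx0.
have GE : G = lnorm H w by rewrite /w lnormHi.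
have G0 : 0 < G by rewrite GE /lnorm sqrtr_gt0; apply: pH.
set q := Num.sqrt (1 + 2 * L * G).
have LG0 : 0 < L * G by apply: mulr_gt0.
have q2 : q ^+ 2 = 1 + 2 * L * G by rewrite /q sqr_sqrtr //; nra.
have q0 : 0 <= q by apply: sqrtr_ge0.
have q1 : 1 < q by nra.
have aE : alpha * (L * G) = q - 1 by rewrite /alpha /aicn_alpha -/q mulfVK ?gt_eqF //; ring.
have aq : alpha * (q + 1) = 2.
  apply: (@mulIf _ (L * G)); first by rewrite gt_eqF.
  rewrite mulrAC aE; nra.
have a0 : 0 < alpha by nra.
have a1 : alpha < 1 by nra.
have key : L * alpha ^+ 2 * G = 2 * (1 - alpha) by nra.
set hm := (- alpha) *: w.
have xk1E : xk1 = xk + hm by rewrite /xk1 /aicn_step /hm scaleNr.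
have bE : lnorm H hm = alpha * G by rewrite /hm lnormZ normrN gtr0_norm // GE.
set g1 := grad xk1.
set n := dnorm H g1.
set z := invmx H *m g1.
have n0 : 0 <= n := dnorm_ge0 _ _.
have nz : lnorm H z = n by rewrite /z lnormHi.
have T := taylor xk hm z.
rewrite -xk1E -/g1 bE nz in T.
have e1 : dotp g1 z = n ^+ 2 by rewrite /n (dnorm_sqr pH).
have e2 : dotp (H *m hm) z = - alpha * dotp g z by rewrite /hm -scalemxAr Hw dotpZl.
have e3 : dotp g z <= n * G.
  apply: le_trans (ler_norm _) _; rewrite dotpC -nz.
  exact: (pair sH pH).
rewrite e1 e2 in T.
have nb : n ^+ 2 <= L * alpha ^+ 2 * G ^+ 2 * n.
  have : (1 - alpha) * dotp g z <= (1 - alpha) * (n * G) by apply: ler_wpM2l => //; lra.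
  nra.
have part1 : n <= L * alpha ^+ 2 * G ^+ 2.
  have X0 : 0 <= L * alpha ^+ 2 * G ^+ 2 by nra.
  nra.
have part1b : L * alpha ^+ 2 * G ^+ 2 < L * G ^+ 2.
  have A2 : 0 < 1 - alpha ^+ 2 by nra.
  have LG2 : 0 < L * G ^+ 2 by apply: mulr_gt0 => //; apply: exprn_gt0.
  have := mulr_gt0 A2 LG2; lra.
have part2 : forall c : R, 0 < c -> c < 1 ->
        G <= ((2 * c + 1) ^+ 2 - 1) / (2 * L) ->
        dnorm (hess xk1) g1 <= L * alpha ^+ 2 / (1 - c) * G ^+ 2.
  move=> c c0 c1 Gc.
  rewrite ler_pdivlMr in Gc; last by nra.
  have qc : q <= 2 * c + 1 by nra.
  have sy := symP xk1; have py := @pdP xk1.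
  set a := lnorm (hess xk1) (xk - xk1).
  have vE : xk - xk1 = (-1) *: hm by rewrite xk1E scaleN1r opprD addrA subrr add0r.
  have dE : xk1 - xk = hm by rewrite xk1E addrC addKr.
  have A1 := stepA xk xk1 (xk - xk1).
  rewrite -/H dE bE -(lnorm_sqr sy py) -/a -(lnorm_sqr sH pH) vE lnormZ normrN normr1 mul1r bE in A1.
  have aa0 : 0 <= a := lnorm_ge0 _ _.
  have e : L * (alpha * G) = q - 1 by rewrite -aE; ring.
  have a2 : (L * a) ^+ 2 <= (1 + (q - 1)) * (q - 1) ^+ 2.
    have h := ler_wpM2l (sqr_ge0 L) A1.
    have -> : (L * a) ^+ 2 = L ^+ 2 * a ^+ 2 by ring.
    apply: le_trans h _.
    have -> : L ^+ 2 * ((1 + L * (alpha * G)) * (alpha * G) ^+ 2) = (1 + L * (alpha * G)) * (L * (alpha * G)) ^+ 2 by ring.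
    by rewrite e.
  have k0 : 0 <= 1 + L * a by apply: addr_ge0 => //; apply: mulr_ge0 => //; apply: ltW.
  have B := @loewner R d H (hess xk1) sH pH sy py (1 + L * a) k0 (fun v => stepA xk1 xk v) g1.
  rewrite -/n in B.
  have NL := @numlem R c (L * a) (q - 1) c0 c1 ltac:(lra) ltac:(lra) ltac:(by apply: mulr_ge0 => //; apply: ltW) a2.
  set S := Num.sqrt (1 + L * a) in B.
  have S0 : 0 <= S := sqrtr_ge0 _.
  have S1 : S * (1 - c) <= 1.
    rewrite -(@ger0_norm _ (1 - c)); last by lra.
    by rewrite -sqrtr_sqr /S -sqrtrM // -[leRHS]sqrtr1 ler_sqrt //.
  set X := L * alpha ^+ 2 * G ^+ 2 in part1 *.
  have eX : L * alpha ^+ 2 / (1 - c) * G ^+ 2 = X / (1 - c).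
    rewrite /X mulrAC -!mulrA; congr (_ * _); rewrite mulrC -mulrA; congr (_ * _); exact: mulrC.
  rewrite eX.
  rewrite ler_pdivlMr; last by lra.
  have X0 : 0 <= X by nra.
  have h1 : dnorm (hess xk1) g1 * (1 - c) <= S * n * (1 - c) by apply: ler_wpM2r => //; lra.
  apply: le_trans h1 _.
  have h2 : S * n <= S * X by apply: ler_wpM2l.
  nra.
split; first by split.
split; first exact: part2.
move=> c c0 c1 Gc Gc2.
apply: le_trans (part2 c c0 c1 Gc) _.
rewrite ler_pdivlMr in Gc2; last by nra.
have qc : q <= 2 - c by nra.
have k2 : 2 * (1 - alpha) <= 1 - c by nra.
have eX : L * alpha ^+ 2 / (1 - c) * G ^+ 2 = (L * alpha ^+ 2 * G) * G / (1 - c).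
  by rewrite mulrAC -!mulrA; congr (_ * _); rewrite mulrC -!mulrA; congr (_ * _); rewrite mulrC.
rewrite eX key ler_pdivrMr; last by lra.
nra.
Qed.
End Main.

Theorem lemma8 (R : realType) (d : nat) (f : 'cV[R]_d -> R)
  (grad : 'cV[R]_d -> 'cV[R]_d) (hess : 'cV[R]_d -> 'M[R]_d)
  (Lsemi Lest : R) (xk : 'cV[R]_d) :
  convex_function setT f ->
  C2_with f grad hess ->
  hess_pd hess ->
  semi_strongly_sc hess Lsemi ->
  0 < Lest -> Lsemi <= Lest ->
  grad xk != 0 ->
  let G := dnorm (hess xk) (grad xk) in
  let alpha := aicn_alpha Lest G in
  let xk1 := aicn_step grad hess Lest xk in
  (* (i) *)
  (dnorm (hess xk) (grad xk1) <= Lest * alpha ^+ 2 * G ^+ 2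
   /\ Lest * alpha ^+ 2 * G ^+ 2 < Lest * G ^+ 2)
  (* (ii) *)
  /\ (forall c : R, 0 < c -> c < 1 ->
        G <= ((2 * c + 1) ^+ 2 - 1) / (2 * Lest) ->
        dnorm (hess xk1) (grad xk1) <= Lest * alpha ^+ 2 / (1 - c) * G ^+ 2)
  (* (iii) *)
  /\ (forall c : R, 0 < c -> c < 1 ->
        G <= ((2 * c + 1) ^+ 2 - 1) / (2 * Lest) ->
        G <= ((2 - c) ^+ 2 - 1) / (2 * Lest) ->
        dnorm (hess xk1) (grad xk1) <= G).
Proof.
move=> _ [Hf [Hg Hc]] Hpd Hsc L0 LL g0.
exact: (@mainres R d f grad hess Lsemi Lest Hf Hg Hc Hpd Hsc L0 LL xk g0).
Qed.
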